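(* For every positive integer $s$ and every integer $j\ge 1$, $$\sum_{i=0}^{j-1}h_{s,i,j}=(-1)^{j+1}(s-1)\binom{s-1}{j-1},$$ where $h_{s,i,j}$ is defined in the context.
   Context: For a fixed positive integer $s$, the numbers $h_{s,i,j}$ (integers $i\ge 0$, $j$) are defined recursively by: $h_{s,i,j}=0$ if $j\le i$; for $i=0$ and $j\ge 1$, $h_{s,0,j}=\binom{s+j-1}{j}\frac{s-j}{s}$; for $i>0$ and $j>i$, $h_{s,i,j}=-\frac{s-j+1}{i}h_{s,i-1,j-1}-\frac{j-i}{i}h_{s,i-1,j}$. *)

(* Defs.v *)
From mathcomp Require Import all_boot all_order all_algebra.
Set Implicit Arguments. Unset Strict Implicit. Unset Printing Implicit Defensive.
Import Order.TTheory GRing.Theory Num.Theory.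
Local Open Scope ring_scope.

(* h s i j for i >= 0, j : nat.  For j <= i, h = 0; negative j (always <= i)
   are thus irrelevant and j ranges over nat.  Values are rationals. *)
Fixpoint h (s : nat) (i j : nat) {struct i} : rat :=
  if (j <= i)%N then 0 else
  match i with
  | 0%N => ('C(s + j - 1, j))%:R * ((s%:R - j%:R) / s%:R)
  | i'.+1 => - ((s%:R - j%:R + 1) / i%:R) * h s i' j.-1
             - ((j%:R - i%:R) / i%:R) * h s i' j
  end.

(* Main.v *)
Require Import Defs.
From mathcomp Require Import all_boot all_order all_algebra.
From mathcomp Require Import ring lra zify.
Import Order.TTheory GRing.Theory Num.Theory.
Local Open Scope ring_scope.

Lemma h0 s i j : (j <= i)%N -> h s i j = 0.
Proof. by case: i => [|i] /= ->. Qed.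

Lemma hrel s i j : i.+1%:R * h s i.+1 j + (j%:R - i.+1%:R) * h s i j
  = -(s%:R - j%:R + 1) * h s i j.-1.
Proof.
case: (leqP j i.+1) => Hj.
  rewrite (@h0 s _ _ Hj) mulr0 add0r.
  case: (leqP j i) => Hj'.
    by rewrite (@h0 s i j) ?(@h0 s i j.-1) ?mulr0 //; lia.
  have -> : j = i.+1 by lia.
  by rewrite subrr mul0r (@h0 s i i) ?mulr0.
rewrite [h s i.+1 j]/= leqNgt Hj /=.
have Hi : (i.+1%:R : rat) != 0 by rewrite pnatr_eq0.
field. by rewrite -mulrS.
Qed.

Arguments h : simpl never.
Definition S s j := \sum_(0 <= i < j) h s i j.

Lemma Srec s k : k.+1%:R * S s k.+2 = - (s%:R - k.+2%:R + 1) * S s k.+1.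
Proof.
rewrite /S.
have -> : k.+1%:R * \sum_(0 <= i < k.+2) h s i k.+2 =
  \sum_(0 <= i < k.+2) i%:R * h s i k.+2 +
  \sum_(0 <= i < k.+2) (k.+2%:R - i.+1%:R) * h s i k.+2.
  rewrite -big_split /= mulr_sumr; apply: eq_bigr => i _.
  rewrite -mulrDl; congr (_ * _).
  rewrite !mulrS; ring.
rewrite [X in X + _]big_nat_recl // [X in _ + X]big_nat_recr //.
have -> : (k.+2%:R - (k.+1).+1%:R) * h s k.+1 k.+2 = 0 by rewrite subrr mul0r.
rewrite mul0r add0r /= addr0.
rewrite -big_split /= mulr_sumr; apply: eq_bigr => i _.
by rewrite hrel.
Qed.

Theorem corollary9 (s j : nat) : (0 < s)%N -> (1 <= j)%N ->
  \sum_(0 <= i < j) h s i j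
  = (-1) ^+ j.+1 * (s%:R - 1) * ('C(s - 1, j - 1))%:R.
Proof.
move=> Hs; case: j => [//|k] _.
elim: k => [|k IH].
  rewrite big_nat1 subnn bin0 mulr1 expr2 mulrN1 opprK mul1r.
  rewrite /h /= addn1 bin1.
  have Hs' : (s%:R : rat) != 0 by rewrite pnatr_eq0 -lt0n.
  rewrite subn1 /=. field; exact: Hs'.
have Hk : (k.+1%:R : rat) != 0 by rewrite pnatr_eq0.
apply: (mulfI Hk).
have := Srec s k; rewrite /S => ->; rewrite IH.
rewrite !subSS !subn0.
have Hb := mul_bin_left (s - 1) k.
have : (k.+1%:R : rat) * ('C(s - 1, k.+1))%:R = (s%:R - k%:R - 1) * ('C(s - 1, k))%:R.
  rewrite -natrM Hb natrM.
  case: (leqP k (s - 1)) => Hks.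
    by rewrite natrB // natrB //; ring.
  by rewrite bin_small // !mulr0.
move=> E.
rewrite mulrA.
rewrite [RHS](_ : _ = (-1) ^+ k.+3 * (s%:R - 1) * (k.+1%:R * 'C(s - 1, k.+1)%:R)); last by ring.
rewrite E !exprS; ring.
Qed.
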